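(* Let $H$ be a $P$-free 3-graph on vertex set $V$ containing a copy of $C$ with vertex set $U=\{x_1,x_2,x_3,y_1,y_2,y_3\}$ and edges $\{x_i,y_j,x_k\}$ for $\{i,j,k\}=\{1,2,3\}$, and let $W=V\setminus U$. Then the set $H(U,W)$ of all edges of $H$ meeting both $U$ and $W$ is an intersecting family, i.e. every two edges of $H(U,W)$ share at least one vertex.
   Context: All hypergraphs are 3-uniform. $P$ is the loose 3-uniform path of length 3: vertices $a,b,c,d,e,f,g$, edges $\{a,b,c\},\{c,d,e\},\{e,f,g\}$; $P$-free means no sub-3-graph isomorphic to $P$. $C$ is the loose triangle (three edges pairwise meeting in exactly one vertex, with six vertices in total). *)

(* Defs.v *)
From mathcomp Require Import all_boot.
Set Implicit Arguments. Unset Strict Implicit. Unset Printing Implicit Defensive.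

Definition uniform3 (V : finType) (H : {set {set V}}) : Prop :=
  forall e, e \in H -> #|e| = 3.

(* H contains a copy of the loose path P: seven distinct vertices a..g with
   edges {a,b,c}, {c,d,e}, {e,f,g} all in H. *)
Definition contains_P (V : finType) (H : {set {set V}}) : Prop :=
  exists a b c d e f g : V,
    [/\ uniq [:: a; b; c; d; e; f; g],
        [set a; b; c] \in H, [set c; d; e] \in H & [set e; f; g] \in H].

Definition P_free (V : finType) (H : {set {set V}}) : Prop := ~ contains_P H.

Definition crossing (V : finType) (H : {set {set V}}) (U W : {set V}) : {set {set V}} :=
  [set e in H | (e :&: U != set0) && (e :&: W != set0)].

Definition intersecting (V : finType) (F : {set {set V}}) : Prop :=
  forall e f, e \in F -> f \in F -> e :&: f != set0.

(* Main.v *)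
Require Import Defs.
From mathcomp Require Import all_boot.
Set Implicit Arguments. Unset Strict Implicit. Unset Printing Implicit Defensive.

Lemma set3E (V : finType) (E : {set V}) a b c :
  #|E| = 3 -> a \in E -> b \in E -> c \in E -> uniq [:: a; b; c] ->
  E = [set a; b; c].
Proof.
move=> cE ha hb hc /= u.
have sub : [set a; b; c] \subset E.
  by apply/subsetP => z; rewrite !inE -!orbA => /or3P[/eqP->|/eqP->|/eqP->].
have c3 : #|[set a; b; c]| = 3.
  move: u; rewrite !inE !negb_or => /andP[/andP[ab ac] /andP[bc _]].
  have -> : [set a; b; c] = a |: [set b; c] by apply/setP=> z; rewrite !inE orbA.
  by rewrite cardsU1 cards2 !inE negb_or ab ac bc.
by apply/esym/eqP; rewrite eqEcard sub cE c3.
Qed.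

Lemma mkP (V : finType) (H : {set {set V}}) a b c d e f g E1 E2 E3 :
  uniform3 H -> E1 \in H -> E2 \in H -> E3 \in H ->
  a \in E1 -> b \in E1 -> c \in E1 -> c \in E2 -> d \in E2 -> e \in E2 ->
  e \in E3 -> f \in E3 -> g \in E3 -> 
  uniq [:: a; b; c; d; e; f; g] -> contains_P H.
Proof.
move=> uH h1 h2 h3 a1 b1 c1 c2 d2 e2 e3 f3 g3 u.
exists a, b, c, d, e, f, g; split => //.
- rewrite -(set3E (uH _ h1) a1 b1 c1) //.
  by apply: subseq_uniq u; apply/subseqP; exists [:: true;true;true;false;false;false;false].
- rewrite -(set3E (uH _ h2) c2 d2 e2) //.
  by apply: subseq_uniq u; apply/subseqP; exists [:: false;false;true;true;true;false;false].
- rewrite -(set3E (uH _ h3) e3 f3 g3) //.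
  by apply: subseq_uniq u; apply/subseqP; exists [:: false;false;false;false;true;true;true].
Qed.

Ltac dist := match goal with |- is_true (uniq _) => idtac end; rewrite /= !inE !negb_or -!andbA; repeat (apply/andP; split); try done;
  first [assumption | rewrite eq_sym; assumption].
Ltac mem := first [assumption | match goal with |- is_true (_ \in ?E) => tryif is_var E then fail else (by rewrite !inE eqxx /= ?orbT) end].

Lemma nodisj (V : finType) (e f : {set V}) v :
  e :&: f = set0 -> v \in e -> v \in f -> False.
Proof. move=> E ve vf; have : v \in e :&: f by rewrite inE ve vf.
by rewrite E inE. Qed.

Lemma cls (V : finType) (H : {set {set V}}) (x1 x2 x3 y1 y2 y3 : V) (e : {set V}) :
  uniform3 H -> uniq [:: x1; x2; x3; y1; y2; y3] ->
  [set x2; y1; x3] \in H -> [set x1; y2; x3] \in H -> [set x1; y3; x2] \in H ->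
  e \in H -> e :&: [set x1; x2; x3; y1; y2; y3] != set0 ->
  e :&: ~: [set x1; x2; x3; y1; y2; y3] != set0 ->
  contains_P H \/ exists2 w, w \notin [set x1; x2; x3; y1; y2; y3] &
    (w \in e) && [|| (x1 \in e) && (x2 \in e), (x1 \in e) && (x3 \in e),
       (x2 \in e) && (x3 \in e), (x1 \in e) && (y1 \in e),
       (x2 \in e) && (y2 \in e) | (x3 \in e) && (y3 \in e)].
Proof.
move=> uH uq h1 h2 h3 he /set0Pn[u /setIP[ue uU]] /set0Pn[w /setIP[we]].
rewrite inE => wU.
have uw : u != w by apply: contraNneq wU => <-.
have c1 : #|e :\ u| = 2 by move: (cardsD1 u e); rewrite ue (uH _ he) /= add1n => -[<-].
have : 0 < #|e :\ u :\ w|.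
  by move: (cardsD1 w (e :\ u)); rewrite c1 !inE eq_sym uw we /= add1n => -[<-].
case/card_gt0P => z; rewrite !inE => /and3P[zw zu ze].
move: (uq); rewrite /= !inE !negb_or -!andbA; repeat (case/andP => ?); try move=> _.
move: (wU); rewrite !inE !negb_or -!andbA; repeat (case/andP => ?); try move=> ?.
case: (boolP (z \in [set x1; x2; x3; y1; y2; y3])) => zU.
- move: uU; rewrite !inE -!orbA =>
    /orP[/eqP ?|/orP[/eqP ?|/orP[/eqP ?|/orP[/eqP ?|/orP[/eqP ?|/eqP ?]]]]]; subst u;
  move: zU; rewrite !inE -!orbA =>
    /orP[/eqP ?|/orP[/eqP ?|/orP[/eqP ?|/orP[/eqP ?|/orP[/eqP ?|/eqP ?]]]]]; subst z;
  try (by rewrite eqxx in zu);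
  first [ left; first [ solve [apply: (@mkP _ _ x1 y3 x2 x3 y1 y2 w ([set x1; y3; x2]) ([set x2; y1; x3]) (e) uH h3 h1 he); solve [mem | dist]] | solve [apply: (@mkP _ _ x1 y2 x3 x2 y1 y3 w ([set x1; y2; x3]) ([set x2; y1; x3]) (e) uH h2 h1 he); solve [mem | dist]] | solve [apply: (@mkP _ _ y1 x2 x3 x1 y2 y3 w ([set x2; y1; x3]) ([set x1; y2; x3]) (e) uH h1 h2 he); solve [mem | dist]] | solve [apply: (@mkP _ _ y1 x3 x2 y3 x1 y2 w ([set x2; y1; x3]) ([set x1; y3; x2]) (e) uH h1 h3 he); solve [mem | dist]] | solve [apply: (@mkP _ _ y3 x1 x2 y1 x3 y2 w ([set x1; y3; x2]) ([set x2; y1; x3]) (e) uH h3 h1 he); solve [mem | dist]] | solve [apply: (@mkP _ _ y2 x3 x1 y3 x2 y1 w ([set x1; y2; x3]) ([set x1; y3; x2]) (e) uH h2 h3 he); solve [mem | dist]] | solve [apply: (@mkP _ _ y3 x2 x1 y2 x3 y1 w ([set x1; y3; x2]) ([set x1; y2; x3]) (e) uH h3 h2 he); solve [mem | dist]] | solve [apply: (@mkP _ _ y1 x2 x3 y2 x1 y3 w ([set x2; y1; x3]) ([set x1; y2; x3]) (e) uH h1 h2 he); solve [mem | dist]] | solve [apply: (@mkP _ _ x1 y2 x3 y1 x2 y3 w ([set x1; y2; x3]) ([set x2; y1; x3]) (e) uH h2 h1 he); solve [mem | dist]] ] | by right; exists w => //; rewrite we ue ze /= ?orbT ].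
- move: (zU); rewrite !inE !negb_or -!andbA; repeat (case/andP => ?); try move=> ?.
  left.
  move: uU; rewrite !inE -!orbA =>
    /orP[/eqP ?|/orP[/eqP ?|/orP[/eqP ?|/orP[/eqP ?|/orP[/eqP ?|/eqP ?]]]]]; subst u;
  first [ solve [apply: (@mkP _ _ w z y1 x2 x3 x1 y2 (e) ([set x2; y1; x3]) ([set x1; y2; x3]) uH he h1 h2); solve [mem | dist]] | solve [apply: (@mkP _ _ w z y2 x3 x1 x2 y3 (e) ([set x1; y2; x3]) ([set x1; y3; x2]) uH he h2 h3); solve [mem | dist]] | solve [apply: (@mkP _ _ w z y3 x1 x2 y1 x3 (e) ([set x1; y3; x2]) ([set x2; y1; x3]) uH he h3 h1); solve [mem | dist]] | solve [apply: (@mkP _ _ w z x1 y2 x3 x2 y1 (e) ([set x1; y2; x3]) ([set x2; y1; x3]) uH he h2 h1); solve [mem | dist]] | solve [apply: (@mkP _ _ w z x2 y1 x3 x1 y2 (e) ([set x2; y1; x3]) ([set x1; y2; x3]) uH he h1 h2); solve [mem | dist]] | solve [apply: (@mkP _ _ w z x3 y1 x2 x1 y3 (e) ([set x2; y1; x3]) ([set x1; y3; x2]) uH he h1 h3); solve [mem | dist]] ].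
Qed.

Theorem mainTheorem8 (V : finType) (H : {set {set V}})
    (x1 x2 x3 y1 y2 y3 : V) :
  uniform3 H -> P_free H ->
  uniq [:: x1; x2; x3; y1; y2; y3] ->
  [set x2; y1; x3] \in H -> [set x1; y2; x3] \in H -> [set x1; y3; x2] \in H ->
  intersecting (crossing H [set x1; x2; x3; y1; y2; y3]
                          (~: [set x1; x2; x3; y1; y2; y3])).
Proof.
move=> uH PF uq h1 h2 h3 e f; rewrite /crossing !inE => /and3P[he eU eW] /and3P[hf fU fW].
apply/negP => /eqP ef0.
have [Pe|[w wU /andP[we be]]] := cls uH uq h1 h2 h3 he eU eW; first exact: PF Pe.
have [Pf|[w' w'U /andP[w'f bf]]] := cls uH uq h1 h2 h3 hf fU fW; first exact: PF Pf.
have ww : w != w'.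
  apply/eqP => E; subst w'.
  have : w \in e :&: f by rewrite inE we w'f.
  by rewrite ef0 inE.
move: (uq); rewrite /= !inE !negb_or -!andbA; repeat (case/andP => ?); try move=> _.
move: (wU); rewrite !inE !negb_or -!andbA; repeat (case/andP => ?); try move=> ?.
move: (w'U); rewrite !inE !negb_or -!andbA; repeat (case/andP => ?); try move=> ?.
move: be bf => /orP[/andP[? ?]|/orP[/andP[? ?]|/orP[/andP[? ?]|/orP[/andP[? ?]|/orP[/andP[? ?]|/andP[? ?]]]]]]
  /orP[/andP[? ?]|/orP[/andP[? ?]|/orP[/andP[? ?]|/orP[/andP[? ?]|/orP[/andP[? ?]|/andP[? ?]]]]]];
 first [ solve [by apply: (@nodisj _ e f x1 ef0)]
       | solve [by apply: (@nodisj _ e f x2 ef0)]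
       | solve [by apply: (@nodisj _ e f x3 ef0)]
       | solve [by apply: (@nodisj _ e f y1 ef0)]
       | solve [by apply: (@nodisj _ e f y2 ef0)]
       | solve [by apply: (@nodisj _ e f y3 ef0)]
       | apply: PF; first [ solve [apply: (@mkP _ _ w x1 x2 y1 x3 y3 w' (e) ([set x2; y1; x3]) (f) uH he h1 hf); solve [mem | dist]] | solve [apply: (@mkP _ _ w' x1 x2 y1 x3 y3 w (f) ([set x2; y1; x3]) (e) uH hf h1 he); solve [mem | dist]] | solve [apply: (@mkP _ _ w x1 x3 y1 x2 y2 w' (e) ([set x2; y1; x3]) (f) uH he h1 hf); solve [mem | dist]] | solve [apply: (@mkP _ _ w' x1 x3 y1 x2 y2 w (f) ([set x2; y1; x3]) (e) uH hf h1 he); solve [mem | dist]] | solve [apply: (@mkP _ _ w x2 x3 y2 x1 y1 w' (e) ([set x1; y2; x3]) (f) uH he h2 hf); solve [mem | dist]] | solve [apply: (@mkP _ _ w' x2 x3 y2 x1 y1 w (f) ([set x1; y2; x3]) (e) uH hf h2 he); solve [mem | dist]] | solve [apply: (@mkP _ _ w y1 x1 x3 y2 x2 w' (e) ([set x1; y2; x3]) (f) uH he h2 hf); solve [mem | dist]] | solve [apply: (@mkP _ _ w' y1 x1 x3 y2 x2 w (f) ([set x1; y2; x3]) (e) uH hf h2 he); solve [mem | dist]] | solve [apply: (@mkP _ _ w y1 x1 x2 y3 x3 w' (e) ([set x1; y3; x2]) (f) uH he h3 hf); solve [mem | dist]] | solve [apply: (@mkP _ _ w' y1 x1 x2 y3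 x3 w (f) ([set x1; y3; x2]) (e) uH hf h3 he); solve [mem | dist]] | solve [apply: (@mkP _ _ w y2 x2 y1 x3 y3 w' (e) ([set x2; y1; x3]) (f) uH he h1 hf); solve [mem | dist]] | solve [apply: (@mkP _ _ w' y2 x2 y1 x3 y3 w (f) ([set x2; y1; x3]) (e) uH hf h1 he); solve [mem | dist]] ] ].
Qed.
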